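(* Let $\mathbf{X}_1,\dots,\mathbf{X}_T\in\mathbb{R}^{d\times\ell}$, $\mathbf{Z}_1,\dots,\mathbf{Z}_T\in\mathbb{R}^{2k\times k}$ with $2k\le d$, and let $L(\mathbf{Q})=-\sum_{i=1}^T\|\mathbf{X}_i^\top\mathbf{Q}\mathbf{Z}_i\|_F^2$ for $\mathbf{Q}\in\mathbb{R}^{d\times 2k}$. Given $\mathbf{Q}'\in\mathrm{St}(d,2k)$, let $\mathbf{R}=\sum_{i=1}^T\mathbf{X}_i\mathbf{X}_i^\top\mathbf{Q}'\mathbf{Z}_i\mathbf{Z}_i^\top$ with thin SVD $\mathbf{R}=\mathbf{W}\boldsymbol{\Sigma}\mathbf{V}^\top$, and set $\hat{\mathbf{Q}}=\mathbf{W}\mathbf{V}^\top$. Then $\hat{\mathbf{Q}}\in\arg\min_{\mathbf{Q}\in\mathrm{St}(d,2k)}\|\mathbf{Q}-\mathbf{R}\|_F^2$ and $L(\hat{\mathbf{Q}})\le L(\mathbf{Q}')$. In particular, with $\mathbf{Z}_i=[\cos(\boldsymbol{\Theta}t_i);\sin(\boldsymbol{\Theta}t_i)]$ and $\mathbf{Q}=[\mathbf{H}\ \mathbf{Y}]$, one has $\mathbf{R}=\sum_i[\mathbf{X}_i\mathbf{G}_i^\top\cos(\boldsymbol{\Theta}t_i)\ \ \mathbf{X}_i\mathbf{G}_i^\top\sin(\boldsymbol{\Theta}t_i)]$ with $\mathbf{G}_i=(\mathbf{Q}'\mathbf{Z}_i)^\top\mathbf{X}_i$, and the update does not increase the loss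 $-\sum_i\|\mathbf{X}_i^\top(\mathbf{H}\cos(\boldsymbol{\Theta}t_i)+\mathbf{Y}\sin(\boldsymbol{\Theta}t_i))\|_F^2$ for fixed $\boldsymbol{\Theta}$.
   Context: $\mathrm{St}(d,p)=\{\mathbf{Q}\in\mathbb{R}^{d\times p}:\mathbf{Q}^\top\mathbf{Q}=\mathbf{I}_p\}$ (Stiefel manifold). $\boldsymbol{\Theta}$ is a real diagonal $k\times k$ matrix, $t_i\in\mathbb{R}$, and $[\cdot;\cdot]$ denotes vertical stacking. *)

(* Defs.v *)
From HB Require Import structures.
From mathcomp Require Import all_boot all_order all_algebra.
From mathcomp Require Import all_classical all_reals all_analysis.
Set Implicit Arguments. Unset Strict Implicit. Unset Printing Implicit Defensive.
Import Order.TTheory GRing.Theory Num.Theory.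
Local Open Scope ring_scope.

Definition frob2 (R : realType) (m n : nat) (A : 'M[R]_(m, n)) : R :=
  \sum_(i < m) \sum_(j < n) (A i j) ^+ 2.

Definition stiefel (R : realType) (d p : nat) (Q : 'M[R]_(d, p)) : Prop :=
  Q^T *m Q = 1%:M.

Definition thin_svd (R : realType) (d p : nat) (A : 'M[R]_(d, p))
    (W : 'M[R]_(d, p)) (S : 'M[R]_p) (V : 'M[R]_p) : Prop :=
  [/\ A = W *m S *m V^T, stiefel W, stiefel V,
      is_diag_mx S &
      (forall i : 'I_p, 0 <= S i i)] /\
      (forall i j : 'I_p, (i <= j)%N -> S j j <= S i i).

Definition lossL (R : realType) (d l p k T : nat)
    (X : 'I_T -> 'M[R]_(d, l)) (Z : 'I_T -> 'M[R]_(p, k))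
    (Q : 'M[R]_(d, p)) : R :=
  - \sum_(i < T) frob2 ((X i)^T *m Q *m Z i).

Definition Rmat (R : realType) (d l p k T : nat)
    (X : 'I_T -> 'M[R]_(d, l)) (Z : 'I_T -> 'M[R]_(p, k))
    (Q' : 'M[R]_(d, p)) : 'M[R]_(d, p) :=
  \sum_(i < T) (X i *m (X i)^T *m Q' *m Z i *m (Z i)^T).

Definition cosTheta (R : realType) (k : nat) (theta : 'I_k -> R) (t : R) : 'M[R]_k :=
  diag_mx (\row_j cos (theta j * t)).
Definition sinTheta (R : realType) (k : nat) (theta : 'I_k -> R) (t : R) : 'M[R]_k :=
  diag_mx (\row_j sin (theta j * t)).

Definition lossHY (R : realType) (d l k T : nat)
    (X : 'I_T -> 'M[R]_(d, l)) (theta : 'I_k -> R) (t : 'I_T -> R)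
    (H Y : 'M[R]_(d, k)) : R :=
  - \sum_(i < T) frob2 ((X i)^T *m (H *m cosTheta theta (t i) + Y *m sinTheta theta (t i))).

(* Main.v *)
Require Import Defs.
From mathcomp Require Import all_boot all_order all_algebra.
From mathcomp Require Import all_classical all_reals all_analysis.
From mathcomp Require Import lra.
Import Order.TTheory GRing.Theory Num.Theory.
Local Open Scope ring_scope.

Section H.
Variable R : realType.

Lemma frob2_tr m n (A : 'M[R]_(m, n)) : frob2 A = \tr (A^T *m A).
Proof.
rewrite /frob2 /mxtrace exchange_big /=; apply: eq_bigr => j _.
rewrite mxE; apply: eq_bigr => i _; by rewrite !mxE expr2.
Qed.

Lemma frob2_ge0 m n (A : 'M[R]_(m, n)) : 0 <= frob2 A.
Proof. by apply: sumr_ge0 => i _; apply: sumr_ge0 => j _; exact: sqr_ge0. Qed.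

Lemma diag_tr p (S : 'M[R]_p) : is_diag_mx S -> S^T = S.
Proof.
move/is_diag_mxP=> hS; apply/matrixP => i j; rewrite mxE.
case: (eqVneq (i : nat) j) => [/val_inj -> // | ne].
by rewrite !hS // eq_sym.
Qed.

Lemma tr_diag_ge0 m p (D : 'M[R]_(m, p)) (S : 'M[R]_p) :
  is_diag_mx S -> (forall i, 0 <= S i i) -> 0 <= \tr (D^T *m D *m S).
Proof.
move=> /is_diag_mxP hS hS0; apply: sumr_ge0 => i _.
rewrite mxE (bigD1 i) //= big1 ?addr0; last first.
  by move=> j ne; rewrite hS ?mulr0 //; apply: contra ne => /eqP/val_inj ->.
apply: mulr_ge0 => //; rewrite mxE; apply: sumr_ge0 => r _.
by rewrite !mxE -expr2 sqr_ge0.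
Qed.

Lemma key d p (W : 'M[R]_(d, p)) (S V : 'M[R]_p) (Q : 'M[R]_(d, p)) :
  stiefel W -> stiefel V -> is_diag_mx S -> (forall i, 0 <= S i i) ->
  stiefel Q ->
  \tr (Q^T *m (W *m S *m V^T)) <= \tr S /\
  \tr ((W *m V^T)^T *m (W *m S *m V^T)) = \tr S.
Proof.
rewrite /stiefel => hW hV hSd hS0 hQ.
have hVV : V *m V^T = 1%:M by apply: mulmx1C.
split; last first.
  by rewrite trmx_mul trmxK !mulmxA -(mulmxA V) hW mulmx1 mxtrace_mulC mulmxA hV mul1mx.
set P := Q *m V.
have hP : P^T *m P = 1%:M.
  by rewrite /P trmx_mul mulmxA -(mulmxA V^T) hQ mulmx1.
have E : \tr (Q^T *m (W *m S *m V^T)) = \tr (P^T *m W *m S).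
  by rewrite mulmxA mxtrace_mulC /P trmx_mul !mulmxA.
rewrite E.
have := @tr_diag_ge0 _ _ (P - W) _ hSd hS0.
have hT : (P - W)^T = P^T - W^T by rewrite raddfB.
rewrite hT mulmxBr !mulmxBl hP hW !raddfB /= !mul1mx.
have -> : \tr (W^T *m P *m S) = \tr (P^T *m W *m S).
  by rewrite -mxtrace_tr !trmx_mul trmxK diag_tr // mxtrace_mulC.
lra.
Qed.

Lemma tr_sym m n (A B : 'M[R]_(m, n)) : \tr (B^T *m A) = \tr (A^T *m B).
Proof. by rewrite -mxtrace_tr trmx_mul trmxK. Qed.

Lemma trD m n (A B : 'M[R]_(m, n)) : (A + B)^T = A^T + B^T.
Proof. by rewrite raddfD. Qed.
Lemma trB m n (A B : 'M[R]_(m, n)) : (A - B)^T = A^T - B^T.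
Proof. by rewrite raddfB. Qed.

Lemma frob2_add m n (A B : 'M[R]_(m, n)) :
  frob2 (A + B) = frob2 A + 2 * \tr (A^T *m B) + frob2 B.
Proof.
rewrite !frob2_tr trD mulmxDr !mulmxDl !mxtraceD (@tr_sym _ _ A B); lra.
Qed.

Lemma frob2_sub m n (A B : 'M[R]_(m, n)) :
  frob2 (A - B) = frob2 A - 2 * \tr (A^T *m B) + frob2 B.
Proof.
rewrite !frob2_tr trB mulmxBr !mulmxBl !raddfB /= (@tr_sym _ _ A B); lra.
Qed.

Lemma cross d l p k (X : 'M[R]_(d, l)) (Z : 'M[R]_(p, k)) (Q D : 'M[R]_(d, p)) :
  \tr ((X^T *m Q *m Z)^T *m (X^T *m D *m Z)) =
  \tr (D^T *m (X *m X^T *m Q *m Z *m Z^T)).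
Proof.
symmetry; rewrite -mxtrace_tr !trmx_mul !trmxK -!mulmxA mxtrace_mulC !mulmxA.
by [].
Qed.

Lemma loss_step d l p k T (X : 'I_T -> 'M[R]_(d, l)) (Z : 'I_T -> 'M[R]_(p, k))
  (Q' Qh : 'M[R]_(d, p)) :
  lossL X Z Qh <= lossL X Z Q' - 2 * \tr ((Qh - Q')^T *m Rmat X Z Q').
Proof.
rewrite /lossL /Rmat mulmx_sumr (raddf_sum (@mxtrace _ _)).
set D := Qh - Q'.
have h : \sum_(i < T) (frob2 ((X i)^T *m Q' *m Z i) +
           2 * \tr (D^T *m (X i *m (X i)^T *m Q' *m Z i *m (Z i)^T)))
         <= \sum_(i < T) frob2 ((X i)^T *m Qh *m Z i).
  apply: ler_sum => i _.
  have -> : Qh = Q' + D by rewrite /D addrC subrK.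
  rewrite mulmxDr mulmxDl frob2_add cross.
  have := @frob2_ge0 _ _ ((X i)^T *m D *m Z i).
  lra.
rewrite big_split /= -mulr_sumr in h.
lra.
Qed.

Lemma frob_min d p (Q M : 'M[R]_(d, p)) : stiefel Q ->
  frob2 (Q - M) = p%:R - 2 * \tr (Q^T *m M) + frob2 M.
Proof.
rewrite /stiefel frob2_sub frob2_tr => ->; by rewrite mxtrace1.
Qed.
End H.
Arguments key {R d p W S V Q}.
Arguments loss_step {R d l p k T}.
Arguments frob_min {R d p Q M}.
Arguments trB {R m n}.

Lemma Z_tr (R : realType) k (theta : 'I_k -> R) (t : R) :
  (col_mx (cosTheta theta t) (sinTheta theta t))^T =
  row_mx (cosTheta theta t) (sinTheta theta t).
Proof. by rewrite tr_col_mx /cosTheta /sinTheta !tr_diag_mx. Qed.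

Theorem mainTheorem4 (R : realType) (d l k T : nat) (hkd : (k + k <= d)%N)
    (X : 'I_T -> 'M[R]_(d, l)) (Z : 'I_T -> 'M[R]_(k + k, k))
    (Q' : 'M[R]_(d, k + k)) (hQ' : stiefel Q')
    (W : 'M[R]_(d, k + k)) (S V : 'M[R]_(k + k))
    (hsvd : thin_svd (Rmat X Z Q') W S V) :
  let Qh := W *m V^T in
  [/\ stiefel Qh /\
        (forall Q : 'M[R]_(d, k + k), stiefel Q ->
           frob2 (Qh - Rmat X Z Q') <= frob2 (Q - Rmat X Z Q')),
      lossL X Z Qh <= lossL X Z Q' &
      forall (theta : 'I_k -> R) (t : 'I_T -> R),
        (forall i, Z i = col_mx (cosTheta theta (t i)) (sinTheta theta (t i))) ->
        let G := fun i => (Q' *m Z i)^T *m X i in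
        Rmat X Z Q' =
          \sum_(i < T) row_mx (X i *m (G i)^T *m cosTheta theta (t i))
                              (X i *m (G i)^T *m sinTheta theta (t i))
        /\ lossHY X theta t (lsubmx Qh) (rsubmx Qh)
           <= lossHY X theta t (lsubmx Q') (rsubmx Q')].
Proof.
move=> Qh.
case: hsvd => [[hA hW hV hSd hS0] _].
have hVV : V *m V^T = 1%:M by apply: mulmx1C.
have hQh : stiefel Qh.
  rewrite /stiefel /Qh trmx_mul trmxK mulmxA -(mulmxA V) hW mulmx1.
  exact: hVV.
have hkey : forall Q, stiefel Q -> \tr (Q^T *m Rmat X Z Q') <= \tr (Qh^T *m Rmat X Z Q').
  move=> Q hQ; rewrite hA.
  have [h1 _] := key hW hV hSd hS0 hQ.
  have [_ h2] := key hW hV hSd hS0 hQ.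
  by rewrite /Qh h2.
have hloss : lossL X Z Qh <= lossL X Z Q'.
  have := loss_step X Z Q' Qh.
  rewrite trB mulmxBl raddfB /=.
  have := hkey Q' hQ'.
  lra.
split => //.
  split => // Q hQ.
  rewrite !frob_min //.
  have := hkey Q hQ; lra.
move=> theta t hZ G.
have hLHY : forall Q : 'M[R]_(d, k + k),
    lossHY X theta t (lsubmx Q) (rsubmx Q) = lossL X Z Q.
  move=> Q; rewrite /lossHY /lossL; congr (- _); apply: eq_bigr => i _.
  by rewrite -mul_row_col hsubmxK hZ mulmxA.
split; last by rewrite !hLHY.
rewrite /Rmat; apply: eq_bigr => i _.
rewrite /G trmx_mul trmxK -mul_mx_row.
have -> : row_mx (cosTheta theta (t i)) (sinTheta theta (t i)) = (Z i)^T.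
  by rewrite hZ Z_tr.
by rewrite !mulmxA.
Qed.
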